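(* Let $G_1,\dots,G_n$ be torus grids, let $\Gamma=\{(f_{i,1},f_{i,2},\pi_i)\}_{i=1}^{n-1}$ be a gluing set for them, and let $G$ be the resulting composite grid. Let $T$ be a smooth transition system on $G$. Then there exists a set $\mathbb{T}=\{T_1,\dots,T_n\}$, with $T_i$ a smooth transition system of $G_i$, compatible with $\Gamma$, such that $T=\#\mathbb{T}$.
   Context: A torus grid is a $(k,l)$-regular grid on the torus: an $l$-regular graph ($l$ even) cellularly embedded on the torus whose geometric dual is $k$-regular. A face is cyclic if its boundary walk is a cycle. A gluing set for $G_1,\dots,G_n$ is a collection $\{(f_{i,1},f_{i,2},\pi_i)\}_{i=1}^{n-1}$ where $f_{i,1}$ is a cyclic face of $G_i$, $f_{i,2}$ is a cyclic face of $G_{i+1}$, $f_{i,2}\cap f_{i+1,1}=\emptyset$, and $\pi_i:\partial f_{i,1}\to\partial f_{i,2}$ is an isomorphism of cycle graphs. The composite grid $G$ is obtained by removing the interior of each face $f_{i,j}$ and gluing $\partial f_{i,1}$ to $\partial f_{i,2}$ according to $\pi_i$; it is embedded on the genus-$n$ surface. A transition at a vertex is a partition of its half-edges into pairs; it is smooth if it only pairs half-edges adjacent in the cyclic rotation; a smooth transition system is a choice of smooth transition at each vertex. For a vertex $v$ on a face $f$, a transition at $v$ is an $f$-transition if it pairs the two half-edges of $\partial f$ at $v$ with each other. Smooth transition systems $T_i$ of $G_i$ and $T_{i+1}$ of $G_{i+1}$ are compatible via $(f_{i,1},f_{i,2},\pi_i)$ if for every $v\in\partial f_{i,1}$, $T_i$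 is an $f_{i,1}$-transition at $v$ if and only if $T_{i+1}$ is not an $f_{i,2}$-transition at $\pi_i(v)$; $\mathbb{T}$ is compatible with $\Gamma$ if this holds for each $1\le i<n$. For compatible transitions $t_1$ at $v_1\in\partial f_{i,1}$ and $t_2$ at $v_2=\pi_i(v_1)$, with $v$ the glued vertex of $G$, the connected sum $t_1\# t_2$ at $v$ is defined as follows: every pair of $t_1$ or $t_2$ containing no half-edge of the glued face boundary stays a pair; exactly one of $t_1,t_2$ pairs the two boundary half-edges $h,h'$ (of its face) at its vertex with non-boundary half-edges $s,s'$ respectively, and in $t_1\#t_2$ one pairs $s$ and $s'$ with the half-edges of the glued cycle whose preimages are $h$ and $h'$ respectively. The connected sum $\#\mathbb{T}$ of a set $\mathbb{T}$ compatible with $\Gamma$ is the smooth transition system of $G$ which at each unglued vertex uses the transition of the corresponding $T_i$, and at each vertex formed by gluing $f_{i,1}$ to $f_{i,2}$ uses the connected sum of the transitions of $T_i$ and $T_{i+1}$ at its preimages. *)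

(* Defs.v *)
From mathcomp Require Import all_boot.
Set Implicit Arguments. Unset Strict Implicit. Unset Printing Implicit Defensive.

(* Cellularly embedded graphs as combinatorial maps (rotation systems).     *)
(* Darts = half-edges.  [edge] pairs the two half-edges of an edge,         *)
(* [rot] is the cyclic rotation of half-edges around their vertex.          *)
(* Vertices = [rot]-orbits, edges = [edge]-orbits, faces = orbits of the    *)
(* face permutation [rot \o edge].                                          *)
(* The n torus grids G_1..G_n are encoded as ONE map on a finite dart type  *)
(* D (their disjoint union), together with a labelling comp : D -> 'I_n     *)
(* (comp x = i means x is a half-edge of G_(i+1)); [edge] and [rot]         *)
(* preserve comp, and each fibre of comp must be a torus grid.              *)

Section Maps.
Variable D : finType.
Variables (edge rot : D -> D).

Definition face_perm (x : D) : D := rot (edge x).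

Definition is_map : Prop :=
  [/\ involutive edge, (forall x, edge x != x) & injective rot].

Definition samev (x y : D) : bool := fconnect rot x y.

Definition rot_adj (x y : D) : bool := (y == rot x) || (x == rot y).

Definition is_face (f : {set D}) : Prop :=
  exists d, f = [set x | fconnect face_perm d x].

(* cyclic face: the boundary walk visits pairwise distinct vertices and
   pairwise distinct edges, i.e. it is a cycle *)
Definition cyclic_face (f : {set D}) : Prop :=
  is_face f /\
  {in f &, forall x y, x != y -> ~~ samev x y && (y != edge x)}.

Definition bdry (f : {set D}) : {set D} := f :|: [set edge x | x in f].

Definition corner_of (f : {set D}) (x y : D) : bool :=
  (y == rot x) && (y \in f).

(* the sub-map on the darts of P is a (k,l)-regular grid on the torus:
   nonempty, connected, Euler characteristic V - E + F = 0 (orientable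
   genus 1), every vertex of degree l (l even), every face of degree k *)
Definition torus_grid_on (P : {pred D}) : Prop :=
  [/\ (exists x, x \in P),
      {in P &, forall x y,
          connect (fun a b => (b == edge a) || (b == rot a)) x y},
      ((fcard rot P + fcard face_perm P).*2 = #|P|)%N &
      exists k l : nat, ~~ odd l /\
        {in P, forall x, order rot x = l /\ order face_perm x = k}].

Definition torus_grid_family (n : nat) (comp : D -> 'I_n) : Prop :=
  [/\ is_map,
      (forall x, comp (edge x) = comp x /\ comp (rot x) = comp x) &
      forall i : 'I_n, torus_grid_on [pred x | comp x == i]].

(* Gluing set: for i < n-1, f1 i = f_{i+1,1} (a face of G_{i+1}, i.e. of    *)
(* comp-label i), f2 i = f_{i+1,2} (a face of comp-label i+1), and pi i the  *)
(* cycle isomorphism, acting on the half-edges of the boundary cycles.      *)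
Variables (n : nat) (f1 f2 : nat -> {set D}) (pi : nat -> D -> D).

Definition gluing_set (comp : D -> 'I_n) : Prop :=
  forall i, i.+1 < n ->
  [/\ cyclic_face (f1 i) /\ cyclic_face (f2 i),
      {in f1 i, forall x, comp x = i :> nat} /\
      {in f2 i, forall x, comp x = i.+1 :> nat},
      (i.+2 < n -> forall x y, x \in f2 i -> y \in f1 i.+1 -> ~~ samev x y),
      {in bdry (f1 i) &, injective (pi i)} /\
        pi i @: bdry (f1 i) = bdry (f2 i) &
      {in bdry (f1 i) &, forall x y, samev x y = samev (pi i x) (pi i y)} /\
      {in bdry (f1 i), forall x, pi i (edge x) = edge (pi i x)}].

(* The composite grid G.  Its half-edges are represented by the darts of D  *)
(* that are not boundary half-edges of some f2 i ([kept]); a boundary       *)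
(* half-edge x of f1 i stands for the glued half-edge, whose two preimages   *)
(* are x and pi i x.  [isrep x a] : a is a preimage of the half-edge x of G. *)
Definition gidx : seq nat := iota 0 n.-1.

Definition kept (x : D) : bool := ~~ has (fun i => x \in bdry (f2 i)) gidx.

Definition isrep (x a : D) : bool :=
  (a == x) || has (fun i => (x \in bdry (f1 i)) && (a == pi i x)) gidx.

Definition gbound (a : D) : bool :=
  has (fun i => (a \in bdry (f1 i)) || (a \in bdry (f2 i))) gidx.

Definition gcorner (a b : D) : bool :=
  has (fun i => [|| corner_of (f1 i) a b, corner_of (f1 i) b a,
                    corner_of (f2 i) a b | corner_of (f2 i) b a]) gidx.

(* rotation adjacency in the composite grid G: adjacency in some G_i, after
   identifying glued half-edges, except across the corners of removed faces.
   (At a glued vertex this is the cyclic order H, s_1..s_a, H', t_1..t_b.) *)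
Definition adjG (x y : D) : bool :=
  [exists a, exists b,
     [&& isrep x a, isrep y b, rot_adj a b & ~~ gcorner a b]].

(* T is a smooth transition system of G: a fixed-point-free pairing of the
   half-edges of G (T is only relevant on kept darts) pairing only
   half-edges adjacent in the rotation of G *)
Definition smooth_TS_G (T : D -> D) : Prop :=
  {in kept, forall x, [/\ kept (T x), T (T x) = x, T x != x & adjG x (T x)]}.

(* t is a smooth transition system of every G_i simultaneously *)
Definition smooth_TS (t : D -> D) : Prop :=
  forall x, [/\ t (t x) = x, t x != x & rot_adj x (t x)].

Definition ftrans (t : D -> D) (f : {set D}) (d : D) : bool :=
  [exists x, exists y,
     [&& x \in bdry f, y \in bdry f, x != y, samev x d, samev y d
       & t x == y]].

Definition compatible (t : D -> D) : Prop :=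
  forall i, i.+1 < n ->
    {in bdry (f1 i), forall d, ftrans t (f1 i) d = ~~ ftrans t (f2 i) (pi i d)}.

(* pairs of the connected sum #T: a pair {a, b} of some T_i, with the glued
   boundary half-edges replaced by the glued half-edge of G, except the pair
   of an f-transition (both half-edges on the glued boundary), which is
   dropped *)
Definition connsum_pair (t : D -> D) (x y : D) : bool :=
  [exists a, exists b,
     [&& isrep x a, isrep y b, t a == b & ~~ (gbound a && gbound b)]].

Definition is_connsum (T t : D -> D) : Prop :=
  {in kept &, forall x y, (T x == y) = connsum_pair t x y}.

End Maps.

(* Main.v *)
Require Import Defs.
From mathcomp Require Import all_boot zify.
Set Implicit Arguments. Unset Strict Implicit. Unset Printing Implicit Defensive.

Section Pf.
Variables (D : finType) (edge rot : D -> D) (n : nat) (comp : D -> 'I_n)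
  (f1 f2 : nat -> {set D}) (pi : nat -> D -> D) (T : D -> D).
Hypothesis Hfam : torus_grid_family edge rot comp.
Hypothesis Hglue : gluing_set edge rot f1 f2 pi comp.
Hypothesis HT : smooth_TS_G edge rot n f1 f2 pi T.

Local Notation samev := (Defs.samev rot).
Local Notation bdry := (Defs.bdry edge).
Local Notation gidx := (Defs.gidx n).
Local Notation kept := (Defs.kept edge n f2).
Local Notation isrep := (Defs.isrep edge n f1 pi).
Local Notation gbound := (Defs.gbound edge n f1 f2).
Local Notation gcorner := (Defs.gcorner rot n f1 f2).
Local Notation corner_of := (Defs.corner_of rot).
Local Notation face_perm := (Defs.face_perm edge rot).
Local Notation cyclic := (Defs.cyclic_face edge rot).
Local Notation rot_adj := (Defs.rot_adj rot).

Lemma edgeK : involutive edge. Proof. by case: Hfam => [[]]. Qed.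
Lemma edge_neq x : edge x != x. Proof. by case: Hfam => [[]]. Qed.
Lemma rot_inj : injective rot. Proof. by case: Hfam => [[]]. Qed.
Lemma comp_edge x : comp (edge x) = comp x. Proof. by case: Hfam => _ /(_ x) []. Qed.
Lemma comp_rot x : comp (rot x) = comp x. Proof. by case: Hfam => _ /(_ x) []. Qed.

Lemma samev_refl x : samev x x. Proof. exact: connect0. Qed.
Lemma samev_sym x y : samev x y = samev y x. Proof. exact: (fconnect_sym rot_inj). Qed.
Lemma samev_trans x y z : samev x y -> samev y z -> samev x z. Proof. exact: connect_trans. Qed.
Lemma samev_rot x : samev x (rot x). Proof. exact: fconnect1. Qed.
Lemma samev_comp x y : samev x y -> comp x = comp y.
Proof.
move=> /iter_findex <-; elim: (findex _ _ _) => [|k IH] //=.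
by rewrite comp_rot.
Qed.
Lemma rot_adj_samev x y : rot_adj x y -> samev x y.
Proof.
by case/orP=> /eqP ->; [exact: samev_rot | rewrite samev_sym; exact: samev_rot].
Qed.

Lemma mem_gidx i : (i \in gidx) = (i.+1 < n).
Proof. rewrite /Defs.gidx mem_iota; apply/idP/idP; lia. Qed.

Lemma glue i : i \in gidx ->
  [/\ cyclic (f1 i) /\ cyclic (f2 i),
      {in f1 i, forall x, comp x = i :> nat} /\
      {in f2 i, forall x, comp x = i.+1 :> nat},
      (i.+2 < n -> forall x y, x \in f2 i -> y \in f1 i.+1 -> ~~ samev x y),
      {in bdry (f1 i) &, injective (pi i)} /\
        pi i @: bdry (f1 i) = bdry (f2 i) &
      {in bdry (f1 i) &, forall x y, samev x y = samev (pi i x) (pi i y)} /\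
      {in bdry (f1 i), forall x, pi i (edge x) = edge (pi i x)}].
Proof. by rewrite mem_gidx => /Hglue. Qed.

Lemma cyc1 i : i \in gidx -> cyclic (f1 i). Proof. by case/glue=> -[]. Qed.
Lemma cyc2 i : i \in gidx -> cyclic (f2 i). Proof. by case/glue=> -[]. Qed.

Lemma bdryP (F : {set D}) x : reflect (x \in F \/ exists2 z, z \in F & x = edge z) (x \in bdry F).
Proof.
rewrite /Defs.bdry inE; apply: (iffP orP) => -[->|]; try by left.
- by move/imsetP=> [z zF ->]; right; exists z.
- by move=> [z zF ->]; right; apply/imsetP; exists z.
Qed.

Lemma comp_b1 i x : i \in gidx -> x \in bdry (f1 i) -> comp x = i :> nat.
Proof.
move=> /glue [_ [c1 _] _ _ _] /bdryP [/c1 //|[z /c1 <- ->]].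
by rewrite comp_edge.
Qed.
Lemma comp_b2 i x : i \in gidx -> x \in bdry (f2 i) -> comp x = i.+1 :> nat.
Proof.
move=> /glue [_ [_ c2] _ _ _] /bdryP [/c2 //|[z /c2 <- ->]].
by rewrite comp_edge.
Qed.

Lemma fp_inj : injective face_perm.
Proof. by move=> x y /rot_inj /(can_inj edgeK). Qed.

Lemma face_closed (F : {set D}) z : cyclic F -> z \in F -> face_perm z \in F /\ finv face_perm z \in F.
Proof.
move=> [[d ->] _]; rewrite !inE => dz; split; apply: connect_trans dz _.
  exact: fconnect1.
exact: fconnect_finv.
Qed.

Lemma bdry_samev (F : {set D}) x : cyclic F -> x \in bdry F -> exists2 y, y \in F & samev x y.
Proof.
move=> cF /bdryP [xF|[z zF ->]]; first by exists x => //; exact: samev_refl.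
by exists (face_perm z); [case: (face_closed cF zF) | exact: samev_rot].
Qed.

Lemma cyc_eq (F : {set D}) x y : cyclic F -> x \in F -> y \in F -> samev x y -> x = y.
Proof.
move=> [_ H] xF yF sxy; apply/eqP; apply/negPn/negP => nxy.
by have /andP [/negP] := H x y xF yF nxy.
Qed.

Lemma cyc_notedge (F : {set D}) z : cyclic F -> z \in F -> edge z \notin F.
Proof.
move=> [_ H] zF; apply/negP => ezF.
have nz : z != edge z by rewrite eq_sym edge_neq.
by have /andP [_ /eqP] := H z (edge z) zF ezF nz.
Qed.

Lemma corner (F : {set D}) x y : cyclic F -> x \in bdry F -> y \in bdry F -> samev x y -> x != y ->
  corner_of F x y || corner_of F y x.
Proof.
move=> cF /bdryP [xF|[z zF ->]] /bdryP [yF|[w wF ->]] sxy nxy.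
- by rewrite (cyc_eq cF xF yF sxy) eqxx in nxy.
- have fw := (face_closed cF wF).1.
  have e : x = face_perm w.
    apply: (cyc_eq cF xF fw); apply: samev_trans sxy _; exact: samev_rot.
  by apply/orP; right; rewrite /Defs.corner_of e eqxx fw.
- have fz := (face_closed cF zF).1.
  have e : y = face_perm z.
    apply: (cyc_eq cF yF fz); apply: samev_trans (samev_rot _); by rewrite samev_sym.
  by apply/orP; left; rewrite /Defs.corner_of e eqxx fz.
- have fz := (face_closed cF zF).1; have fw := (face_closed cF wF).1.
  have : face_perm z = face_perm w.
    apply: (cyc_eq cF fz fw); have h1 := samev_rot (edge z); have h2 := samev_rot (edge w).
    rewrite samev_sym in h1; exact: samev_trans h1 (samev_trans sxy h2).
  by rewrite /Defs.face_perm => /rot_inj e; rewrite e eqxx in nxy.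
Qed.

Lemma corner_mem (F : {set D}) x y : corner_of F x y -> y \in F /\ rot_adj x y.
Proof. by case/andP=> /eqP -> ->; rewrite /Defs.rot_adj eqxx. Qed.

Lemma three (F : {set D}) a b c : cyclic F -> a \in bdry F -> b \in bdry F -> c \in bdry F ->
  samev a b -> samev a c -> a != b -> a != c -> b != c -> False.
Proof.
move=> cF aF bF cF' sab sac nab nac nbc.
have sbc : samev b c by apply: samev_trans sac; rewrite samev_sym.
have one u v : u \in F -> v \in F -> samev u v -> u != v -> False.
  by move=> uF vF suv; rewrite (cyc_eq cF uF vF suv) eqxx.
have p1 := corner cF aF bF sab nab; have p2 := corner cF aF cF' sac nac.
have p3 := corner cF bF cF' sbc nbc.
have ma : a \in F -> False.
  move=> aF0; case/orP: p3 => /corner_mem [mF _].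
    by apply: (one a c aF0 mF sac nac).
  by apply: (one a b aF0 mF sab nab).
case/orP: p1 => /corner_mem [mF _]; last exact: ma.
case/orP: p2 => /corner_mem [mF' _]; last exact: ma.
exact: (one b c mF mF' sbc nbc).
Qed.

Lemma partner_ex (F : {set D}) x : cyclic F -> x \in bdry F ->
  exists y, [/\ y \in bdry F, samev x y & y != x].
Proof.
move=> cF /bdryP [xF|[z zF ->]].
- have [_ fz] := face_closed cF xF.
  have e : face_perm (finv face_perm x) = x := f_finv fp_inj x.
  exists (edge (finv face_perm x)); split.
  + by apply/bdryP; right; exists (finv face_perm x).
  + by rewrite samev_sym -{2}e; exact: samev_rot.
  + apply/eqP => ex; have := cyc_notedge cF fz; by rewrite ex xF.
- have fz := (face_closed cF zF).1.
  exists (rot (edge z)); split.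
  + by apply/bdryP; left.
  + exact: samev_rot.
  + apply/eqP => ex; have := cyc_notedge cF zF; by rewrite -ex fz.
Qed.

Lemma no_f1f2 i j a b : i \in gidx -> j \in gidx -> a \in bdry (f1 i) -> b \in bdry (f2 j) ->
  ~~ samev a b.
Proof.
move=> gi gj ai bj; apply/negP => sab.
have ci := comp_b1 gi ai; have cj := comp_b2 gj bj.
have e : i = j.+1 by rewrite -ci -cj (samev_comp sab).
rewrite e in ai gi; clear ci e.
have [_ _ Hd _ _] := glue gj.
have [x xF sx] := bdry_samev (cyc2 gj) bj.
have [y yF sy] := bdry_samev (cyc1 gi) ai.
move: gi; rewrite mem_gidx => gi.
have := Hd gi x y xF yF; apply/negP/negPn.
rewrite samev_sym in sx; apply: samev_trans sx _.
rewrite samev_sym in sab; apply: samev_trans sab _; exact: sy.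
Qed.

Lemma gbP a : reflect (exists2 i, i \in gidx & a \in bdry (f1 i) \/ a \in bdry (f2 i)) (gbound a).
Proof.
apply: (iffP hasP) => -[i gi H]; exists i => //; exact/orP.
Qed.

Lemma gb1 i x : i \in gidx -> x \in bdry (f1 i) -> gbound x.
Proof. by move=> gi xb; apply/gbP; exists i => //; left. Qed.
Lemma gb2 i x : i \in gidx -> x \in bdry (f2 i) -> gbound x.
Proof. by move=> gi xb; apply/gbP; exists i => //; right. Qed.

Lemma gb_f1 i a b : i \in gidx -> a \in bdry (f1 i) -> gbound b -> samev a b -> b \in bdry (f1 i).
Proof.
move=> gi ai /gbP [j gj [bj|bj]] sab.
- have e : i = j by apply/eqP; rewrite -eqSS; apply/eqP;
    rewrite -(comp_b1 gi ai) -(comp_b1 gj bj) (samev_comp sab).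
  by rewrite e.
- by have := no_f1f2 gi gj ai bj; rewrite sab.
Qed.

Lemma gb_f2 i a b : i \in gidx -> a \in bdry (f2 i) -> gbound b -> samev a b -> b \in bdry (f2 i).
Proof.
move=> gi ai /gbP [j gj [bj|bj]] sab.
- by have := no_f1f2 gj gi bj ai; rewrite samev_sym sab.
- have e : i = j by apply/eqP; rewrite -eqSS; apply/eqP;
    rewrite -(comp_b2 gi ai) -(comp_b2 gj bj) (samev_comp sab).
  by rewrite e.
Qed.

Definition gface i (F : {set D}) := (F = f1 i \/ F = f2 i).

Lemma gface_cyc i F : i \in gidx -> gface i F -> cyclic F.
Proof. by move=> gi [->|->]; [exact: cyc1|exact: cyc2]. Qed.
Lemma gface_gb i F x : i \in gidx -> gface i F -> x \in bdry F -> gbound x.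
Proof. by move=> gi [->|->]; [exact: gb1|exact: gb2]. Qed.
Lemma gface_same i F a b : i \in gidx -> gface i F -> a \in bdry F -> gbound b -> samev a b ->
  b \in bdry F.
Proof. by move=> gi [->|->]; [exact: gb_f1|exact: gb_f2]. Qed.
Lemma gface_corner i F x y : i \in gidx -> gface i F -> corner_of F x y || corner_of F y x ->
  gcorner x y.
Proof.
move=> gi [->|->] /orP [c|c]; apply/hasP; exists i => //; by rewrite c ?orbT.
Qed.

Lemma gb_face a : gbound a -> exists i F, [/\ i \in gidx, gface i F & a \in bdry F].
Proof. by case/gbP=> i gi [H|H]; exists i; [exists (f1 i)|exists (f2 i)]; split=> //; [left|right]. Qed.

Lemma GC a b : gbound a -> gbound b -> samev a b -> a != b -> gcorner a b /\ rot_adj a b.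
Proof.
move=> ga gb sab nab; have [i [F [gi gF aF]]] := gb_face ga.
have bF := gface_same gi gF aF gb sab.
have C := corner (gface_cyc gi gF) aF bF sab nab.
split; first exact: (gface_corner gi gF C).
case/orP: C => c; first by case: (corner_mem c).
by case: (corner_mem c) => _; rewrite /Defs.rot_adj orbC.
Qed.

Definition partner a := odflt a [pick b | (b != a) && samev a b && gbound b].

Lemma partnerP a : gbound a -> [/\ partner a != a, samev a (partner a), gbound (partner a) &
  forall c, gbound c -> samev a c -> c != a -> c = partner a].
Proof.
move=> ga; have [i [F [gi gF aF]]] := gb_face ga; have cF := gface_cyc gi gF.
have uniq c d : gbound c -> samev a c -> c != a -> gbound d -> samev a d -> d != a -> c = d.
  move=> gc sc nc gd sd nd; apply/eqP/negPn/negP => ncd.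
  apply: (three cF aF (gface_same gi gF aF gc sc) (gface_same gi gF aF gd sd) sc sd);
    by rewrite // eq_sym.
rewrite /partner; case: pickP => [p /andP [/andP [np sp] gp]|].
  split=> // c gc sc nc; exact: uniq.
have [y [yF sy ny]] := partner_ex cF aF.
by move=> /(_ y); rewrite ny sy (gface_gb gi gF yF).
Qed.

Lemma partnerK a : gbound a -> partner (partner a) = a.
Proof.
move=> ga; have [np sp gp _] := partnerP ga.
have [_ _ _ U] := partnerP gp.
by apply: esym; apply: U => //; [rewrite samev_sym | rewrite eq_sym].
Qed.

Lemma pi_b2 i x : i \in gidx -> x \in bdry (f1 i) -> pi i x \in bdry (f2 i).
Proof. by move=> /glue [_ _ _ [_ <-] _] xb; apply: imset_f. Qed.
Lemma pi_inj i : i \in gidx -> {in bdry (f1 i) &, injective (pi i)}.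
Proof. by move=> /glue [_ _ _ [] ]. Qed.

Lemma kept_f1 i x : i \in gidx -> x \in bdry (f1 i) -> kept x.
Proof.
move=> gi xb; apply/hasPn => j gj; apply/negP => xb2.
by have := no_f1f2 gi gj xb xb2; rewrite samev_refl.
Qed.

Lemma nogb_kept x : ~~ gbound x -> kept x.
Proof.
move=> ng; apply/hasPn => j gj; apply/negP => xb2.
by move/negP: ng; apply; exact: gb2 gj xb2.
Qed.

Lemma isrepP x a : reflect (a = x \/ exists2 i, i \in gidx & x \in bdry (f1 i) /\ a = pi i x)
  (isrep x a).
Proof.
apply: (iffP orP) => -[/eqP ->|]; try by left.
- by move/hasP=> [i gi /andP [xb /eqP ->]]; right; exists i.
- by move=> [i gi [xb ->]]; right; apply/hasP; exists i => //; rewrite xb eqxx.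
Qed.

Lemma rep_ex a : exists x, kept x && isrep x a.
Proof.
case: (boolP (kept a)) => ka; first by exists a; rewrite ka; apply/isrepP; left.
move: ka => /negPn /hasP [i gi ab].
have [_ _ _ [_ im] _] := glue gi.
move: ab; rewrite -im => /imsetP [x xb ->].
exists x; rewrite (kept_f1 gi xb); apply/isrepP; right; exists i => //.
Qed.

Lemma rep_uniq x y a : kept x -> kept y -> isrep x a -> isrep y a -> x = y.
Proof.
move=> kx ky /isrepP [->|[i gi [xb ->]]] /isrepP [e|[j gj [yb e]]] //.
- by move/hasPn: kx => /(_ j gj); rewrite e (pi_b2 gj yb).
- by move/hasPn: ky => /(_ i gi); rewrite -e (pi_b2 gi xb).
- have eij : i = j.
    apply/eqP; rewrite -eqSS; apply/eqP.
    by rewrite -(comp_b2 gi (pi_b2 gi xb)) -(comp_b2 gj (pi_b2 gj yb)) e.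
  subst j; exact: (pi_inj gi xb yb e).
Qed.

Definition gam a := odflt a [pick x | kept x && isrep x a].

Lemma gamP a : kept (gam a) /\ isrep (gam a) a.
Proof.
rewrite /gam; case: pickP => [x /andP [] //|].
by have [x Hx] := rep_ex a => /(_ x); rewrite Hx.
Qed.

Lemma gam_rep x a : kept x -> isrep x a = (gam a == x).
Proof.
move=> kx; have [kg rg] := gamP a; apply/idP/eqP => [r|<-] //.
exact: rep_uniq kg kx rg r.
Qed.

Lemma gam_kept x : kept x -> gam x = x.
Proof. by move=> kx; apply/eqP; rewrite -gam_rep //; apply/isrepP; left. Qed.

Lemma gam_diff a a' : gam a = gam a' -> a != a' ->
  [/\ gbound a, gbound a' & ~~ samev a a'].
Proof.
have [kg rg] := gamP a; move=> e; have [_ rg'] := gamP a'; rewrite -e in rg'.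
move: kg rg rg'; move: (gam a) => x kx.
move=> /isrepP [->|[i gi [xb ->]]] /isrepP [->|[j gj [yb ->]]]; rewrite ?eqxx //.
- move=> _; split; [exact: gb1 gj yb|exact: gb2 gj (pi_b2 gj yb)|].
  apply/negP => /samev_comp /(congr1 val) /= h.
  by move: (comp_b1 gj yb) (comp_b2 gj (pi_b2 gj yb)); rewrite h => ->; lia.
- move=> _; split; [exact: gb2 gi (pi_b2 gi xb)|exact: gb1 gi xb|].
  apply/negP => /samev_comp /(congr1 val) /= h.
  by move: (comp_b1 gi xb) (comp_b2 gi (pi_b2 gi xb)); rewrite h => ->; lia.
- have eij : i = j by apply/eqP; rewrite -eqSS; apply/eqP; rewrite -(comp_b1 gi xb) (comp_b1 gj yb).
  by subst j; rewrite eqxx.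
Qed.

Lemma gam_inj_v a b : samev a b -> gam a = gam b -> a = b.
Proof.
move=> sab e; apply/eqP/negPn/negP => nab.
by have [_ _] := gam_diff e nab; rewrite sab.
Qed.

Definition Rel a b := samev a b && isrep (T (gam a)) b && ~~ (gbound a && gbound b).

Lemma RelE a b : Rel a b -> gam b = T (gam a).
Proof.
case/andP => /andP [_ r] _; have kg := (gamP a).1; have [kT _ _ _] := HT kg.
by apply/eqP; rewrite -gam_rep.
Qed.

Lemma Rel_sym a b : Rel a b -> Rel b a.
Proof.
move=> R; have e := RelE R; case/andP: R => /andP [s _] g.
have kg := (gamP a).1; have [_ TT _ _] := HT kg.
rewrite /Rel samev_sym s e TT (gamP a).2 /=.
by rewrite andbC.
Qed.

Lemma Rel_uniq a b c : Rel a b -> Rel a c -> b = c.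
Proof.
move=> R1 R2; apply: gam_inj_v; last by rewrite (RelE R1) (RelE R2).
case/andP: R1 => /andP [s1 _] _; case/andP: R2 => /andP [s2 _] _.
by rewrite samev_sym in s1; apply: samev_trans s1 s2.
Qed.

Lemma Rel_neq a b : Rel a b -> b != a.
Proof.
move=> R; apply/eqP => e; have := RelE R; rewrite e.
have kg := (gamP a).1; have [_ _ Tn _] := HT kg.
by move=> h; rewrite -h eqxx in Tn.
Qed.

Lemma adj_Rel x : kept x -> exists a b, [/\ gam a = x, gam b = T x & Rel a b].
Proof.
move=> kx; have [kT TT Tn adj] := HT kx.
move/existsP: adj => [a /existsP [b /and4P [ra rb ab nc]]].
have ga : gam a = x by apply/eqP; rewrite -gam_rep.
have gb : gam b = T x by apply/eqP; rewrite -gam_rep.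
exists a, b; split => //.
rewrite /Rel (rot_adj_samev ab) ga rb /=; apply/negP => /andP [gba gbb].
have nab : a != b by apply/eqP => eab; move: Tn; rewrite -gb -ga eab eqxx.
by have [c _] := GC gba gbb (rot_adj_samev ab) nab; rewrite c in nc.
Qed.

Lemma Rel_adj a b : Rel a b -> rot_adj a b.
Proof.
move=> R; have kx := (gamP a).1; have [kT TT Tn adj] := HT kx.
move/existsP: adj => [a' /existsP [b' /and4P [ra rb ab nc]]].
have ga : gam a' = gam a by apply/eqP; rewrite -gam_rep.
have gb : gam b' = gam b by rewrite (RelE R); apply/eqP; rewrite -gam_rep.
have [/andP [s _] ng] := andP R.
case: (a' =P a) => [ea|/eqP na].
  subst a'; have e : b' = b.
    apply: gam_inj_v gb; have := rot_adj_samev ab; rewrite samev_sym => h.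
    exact: samev_trans h s.
  by rewrite -e.
have na2 : a != a' by rewrite eq_sym.
have [gba _ nsa] := gam_diff (esym ga) na2.
case: (b' =P b) => [eb|/eqP nb].
  subst b'; exfalso; move/negP: nsa; apply; apply: samev_trans s _.
  by rewrite samev_sym; exact: rot_adj_samev ab.
have [_ gbb _] := gam_diff gb nb.
by rewrite gba gbb in ng.
Qed.

Lemma Rel_ex a : ~~ gbound a -> exists b, Rel a b.
Proof.
move=> nga; have ka := nogb_kept nga.
have [a' [b [ga gb R]]] := adj_Rel ka.
case: (a' =P a) => [<-|/eqP na]; first by exists b.
rewrite -(gam_kept ka) in ga.
by have [_ h _] := gam_diff ga na; rewrite h in nga.
Qed.

Definition t a := if [pick b | Rel a b] is Some b then b else partner a.

Lemma t_Rel a b : Rel a b -> t a = b.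
Proof.
move=> R; rewrite /t; case: pickP => [c Rc|/(_ b)]; last by rewrite R.
exact: Rel_uniq Rc R.
Qed.

Lemma t_noRel a : (forall b, ~~ Rel a b) -> t a = partner a.
Proof. by move=> H; rewrite /t; case: pickP => [c Rc|//]; have := H c; rewrite Rc. Qed.

Lemma even_inv (phi : D -> D) (X : {set D}) :
  {in X, forall z, [/\ phi z \in X, phi (phi z) = z & phi z != z]} -> ~~ odd #|X|.
Proof.
suff H : forall k (X : {set D}), #|X| <= k ->
    {in X, forall z, [/\ phi z \in X, phi (phi z) = z & phi z != z]} -> ~~ odd #|X|.
  by move=> HX; exact: H _ _ (leqnn _) HX.
elim=> [|k IH] {}X.
  by rewrite leqn0 => /eqP ->.
move=> Hk HX; case: (set_0Vmem X) => [->|[z zX]]; first by rewrite cards0.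
have [pzX ppz pz] := HX z zX.
set Y := X :\ z :\ phi z.
have cY : #|X| = (#|Y|).+2.
  rewrite (cardsD1 z X) zX (cardsD1 (phi z) (X :\ z)) !in_setD1 pz pzX.
  by rewrite add1n.
have HY : {in Y, forall w, [/\ phi w \in Y, phi (phi w) = w & phi w != w]}.
  move=> w; rewrite /Y !in_setD1 => /andP [n1 /andP [n2 wX]].
  have [pwX ppw pw] := HX w wX.
  split=> //; rewrite pwX andbT; apply/andP; split.
  - by apply/eqP => e; move: n2; rewrite -ppw e ppz eqxx.
  - by apply/eqP => e; move: n1; rewrite -ppw e eqxx.
rewrite cY /=; rewrite negbK; apply: IH HY.
by move: Hk; rewrite cY; lia.
Qed.

Lemma card_v a : #|[set b | samev a b]| = order rot a.
Proof. by rewrite /order; apply: eq_card => b; rewrite inE. Qed.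

Lemma order_even a : ~~ odd (order rot a).
Proof.
case: Hfam => _ _ /(_ (comp a)) [_ _ _ [k [l [ev H]]]].
have aP : a \in [pred x | comp x == comp a] by rewrite unfold_in /= eqxx.
by have [-> _] := H a aP.
Qed.

Lemma parity a : gbound a -> (forall b, ~~ Rel a b) -> forall c, ~~ Rel (partner a) c.
Proof.
move=> ga noR c; apply/negP => Rpc.
have [np sp gp U] := partnerP ga.
set V := [set b | samev a b]; set X := V :\ a.
have ex z : z \in X -> exists w, Rel z w.
  rewrite /X /V in_setD1 inE => /andP [nz sz]; case: (boolP (gbound z)) => gz.
    by rewrite (U z gz sz nz); exists c.
  exact: Rel_ex.
have HX : {in X, forall z, [/\ t z \in X, t (t z) = z & t z != z]}.
  move=> z zX; have [w Rw] := ex z zX; have Rw' := Rel_sym Rw.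
  rewrite (t_Rel Rw) (t_Rel Rw') (Rel_neq Rw); split=> //.
  move: zX; rewrite /X /V !in_setD1 !inE => /andP [_ sz]; apply/andP; split.
    by apply/eqP => e; subst w; have := noR z; rewrite Rw'.
  case/andP: Rw => /andP [s _] _; exact: samev_trans sz s.
have e : #|V| = #|X|.+1 by rewrite (cardsD1 a V) inE samev_refl.
have := order_even a; rewrite -card_v -/V e /= negbK => h.
by have := even_inv HX; rewrite h.
Qed.

Lemma t_smooth x : [/\ t (t x) = x, t x != x & rot_adj x (t x)].
Proof.
case: (boolP [exists b, Rel x b]) => [/existsP [b R]|/existsPn noR].
  by rewrite (t_Rel R) (t_Rel (Rel_sym R)) (Rel_neq R) (Rel_adj R).
have gx : gbound x.
  apply/negPn/negP => ng; have [b R] := Rel_ex ng; by have := noR b; rewrite R.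
have [np sp gp U] := partnerP gx.
rewrite (t_noRel noR) (t_noRel (parity gx noR)) partnerK //; split=> //.
have nx : x != partner x by rewrite eq_sym.
exact: (GC gx gp sp nx).2.
Qed.

Lemma t_partner d : gbound d -> (t d == partner d) = ~~ [exists b, Rel d b].
Proof.
move=> gd; have [np sp gp U] := partnerP gd.
case: existsP => [[b R]|noR] /=.
  rewrite (t_Rel R); apply/negbTE/eqP => e.
  by move: R; rewrite /Rel gd e gp andbF.
by rewrite t_noRel ?eqxx // => b; apply/negP => R; apply: noR; exists b.
Qed.

Lemma ftransE i F d : i \in gidx -> gface i F -> d \in bdry F ->
  Defs.ftrans edge rot t F d = (t d == partner d).
Proof.
move=> gi gF dF; have gd := gface_gb gi gF dF; have [np sp gp U] := partnerP gd.
apply/existsP/eqP.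
  move=> [x /existsP [y /andP [xb /andP [yb /andP [nxy /andP [sx /andP [sy /eqP txy]]]]]]].
  have gx := gface_gb gi gF xb; have gy := gface_gb gi gF yb.
  case: (x =P d) => [exd|/eqP nxd].
    subst x; rewrite txy; apply: U => //; first by rewrite samev_sym.
    by rewrite eq_sym.
  have ex : x = partner d by apply: U => //; rewrite samev_sym.
  case: (y =P d) => [eyd|/eqP nyd].
    by have [tt _ _] := t_smooth x; rewrite -ex -eyd -txy tt.
  have ey : y = partner d by apply: U => //; rewrite samev_sym.
  by rewrite ex ey eqxx in nxy.
move=> e; exists d; apply/existsP; exists (partner d).
rewrite dF (gface_same gi gF dF gp sp) eq_sym np samev_refl /= e eqxx andbT.
by rewrite samev_sym.
Qed.

Lemma t_compat : compatible edge rot n f1 f2 pi t.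
Proof.
move=> i lt d db; have gi : i \in gidx by rewrite mem_gidx.
have pdb := pi_b2 gi db.
have g1 : gface i (f1 i) by left. have g2 : gface i (f2 i) by right.
rewrite (ftransE gi g1 db) (ftransE gi g2 pdb).
rewrite !t_partner ?(gb1 gi db) ?(gb2 gi pdb) //.
suff key : [exists b, Rel (pi i d) b] = ~~ [exists b, Rel d b].
  by rewrite key; case: [exists b, Rel d b].
have kd := kept_f1 gi db.
have gd : gam d = d := gam_kept kd.
have gpd : gam (pi i d) = d.
  by apply/eqP; rewrite -gam_rep //; apply/isrepP; right; exists i.
have notboth b c : Rel d b -> Rel (pi i d) c -> False.
  move=> R1 R2; have e1 := RelE R1; have e2 := RelE R2.
  rewrite gd in e1; rewrite gpd in e2.
  case: (b =P c) => [ebc|/eqP nbc].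
    subst c; case/andP: R1 => /andP [s1 _] _; case/andP: R2 => /andP [s2 _] _.
    have := no_f1f2 gi gi db pdb; rewrite samev_sym in s2.
    by rewrite (samev_trans s1 s2).
  have [gb _ _] := gam_diff (etrans e1 (esym e2)) nbc.
  by move: R1; rewrite /Rel (gb1 gi db) gb /= andbF.
have [a' [b [ga gb R]]] := adj_Rel kd.
have ca : a' = d \/ a' = pi i d.
  have : isrep d a' by rewrite gam_rep // ga.
  case/isrepP => [->|[j gj [dj ->]]]; first by left.
  right; have e : j = i.
    by apply/eqP; rewrite -eqSS; apply/eqP; rewrite -(comp_b1 gj dj) (comp_b1 gi db).
  by rewrite e.
case: (boolP [exists b, Rel d b]) => [/existsP [b1 R1]|/existsPn no1];
  case: (boolP [exists b, Rel (pi i d) b]) => [/existsP [c1 R2]|/existsPn no2] //=.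
- by case: (notboth _ _ R1 R2).
- by case: ca => ea; subst a'; [have := no1 b|have := no2 b]; rewrite R.
Qed.

Lemma t_connsum : is_connsum edge n f1 f2 pi T t.
Proof.
move=> x y kx ky; apply/eqP/existsP.
  move=> e; subst y; have [a [b [ga gb R]]] := adj_Rel kx.
  exists a; apply/existsP; exists b.
  rewrite (gam_rep _ kx) ga eqxx (gam_rep _ ky) gb eqxx (t_Rel R) eqxx /=.
  by case/andP: R.
move=> [a /existsP [b /and4P [ra rb /eqP tab ng]]].
move: ra rb; rewrite (gam_rep _ kx) (gam_rep _ ky) => /eqP ga /eqP gb.
case: (boolP [exists c, Rel a c]) => [/existsP [c R]|/existsPn noR].
  rewrite (t_Rel R) in tab; subst c.
  by rewrite -ga -gb (RelE R).
have gx : gbound a.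
  apply/negPn/negP => ng'; have [b' R] := Rel_ex ng'; by have := noR b'; rewrite R.
have [_ _ gp _] := partnerP gx.
by move: ng; rewrite -tab (t_noRel noR) gx gp.
Qed.

Lemma main_sec : exists t : D -> D,
    [/\ smooth_TS rot t,
        compatible edge rot n f1 f2 pi t &
        is_connsum edge n f1 f2 pi T t].
Proof.
exists t; split; [exact: t_smooth | exact: t_compat | exact: t_connsum].
Qed.

End Pf.

Theorem mainTheorem10 (D : finType) (edge rot : D -> D) (n : nat)
    (comp : D -> 'I_n) (f1 f2 : nat -> {set D}) (pi : nat -> D -> D)
    (T : D -> D) :
  torus_grid_family edge rot comp ->
  gluing_set edge rot f1 f2 pi comp ->
  smooth_TS_G edge rot n f1 f2 pi T ->
  exists t : D -> D,
    [/\ smooth_TS rot t,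
        compatible edge rot n f1 f2 pi t &
        is_connsum edge n f1 f2 pi T t].
Proof. move=> Hf Hg HT; exact: main_sec Hf Hg HT. Qed.
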